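(* Let $k\ge1$ and let $B\in\mathfrak{gl}_n(\mathbb C)$ satisfy $B[B,B^*]=-B$, $B^k\ne0$, $B^{k+1}=0$. Let $\mathbb C^n=V_0\oplus\cdots\oplus V_k$ be an orthogonal decomposition with $V_0=\ker B$, $B(V_i)\subset V_{i-1}$ for $1\le i\le k$, and such that $E_i:=\mathrm{Pr}_{V_{i-1}}B|_{V_i}$ satisfy $E_i^*E_i-E_{i+1}E_{i+1}^*=\mathrm{Id}_{V_i}$ for $1\le i<k$ and $E_k^*E_k=\mathrm{Id}_{V_k}$ (such a decomposition exists). Then there is an orthonormal basis of $\mathbb C^n$ subordinate to this splitting in which $B$ is represented by the block matrix whose only nonzero blocks are $\Sigma_i\in\mathbb C^{\dim V_{i-1}\times\dim V_i}$ in block position $(i-1,i)$, $1\le i\le k$, where each $\Sigma_i$ has nonzero entries only on its main diagonal, these entries $\sigma_{ij}:=(\Sigma_i)_{jj}$ ($1\le j\le\dim V_i$) being positive reals given recursively by $$\sigma_{ij}=\begin{cases}\sqrt{1+\sigma_{(i+1)j}^2},& i<k,\ 1\le j\le\dim V_{i+1},\\ 1,& i<k,\ \dim V_{i+1}<j\le\dim V_i,\\ 1,& i=k,\ 1\le j\le\dim V_k.\end{cases}$$ In particular this matrix representation is uniquely determined by the numbers $\dim V_i$, and hence only by the Jordan decomposition of $B$.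
   Context: $\mathbb C^n$ carries the standard Hermitian inner product; $^*$ denotes adjoint, $\mathrm{Pr}_V$ orthogonal projection onto $V$, $[X,Y]=XY-YX$. A basis is subordinate to the splitting if it is a union of bases of the $V_i$, listed in order $V_0,V_1,\dots,V_k$. *)

(* Defs.v *)
From HB Require Import structures.
From mathcomp Require Import all_boot all_order all_algebra.
From mathcomp Require Import complex reals.
Set Implicit Arguments. Unset Strict Implicit. Unset Printing Implicit Defensive.
Import Order.TTheory GRing.Theory Num.Theory.
Local Open Scope ring_scope.

(* A linear subspace V of C^n is
   represented (mxalgebra style) by a matrix whose ROW space is
   { x^T | x in V }, i.e. a column vector x lies in V iff (x^T <= V)%MS. *)

Definition mxadj (C : numClosedFieldType) m n (A : 'M[C]_(m, n)) : 'M[C]_(n, m) :=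
  (map_mx (fun x => x^*) A)^T.

Definition is_orth_proj (C : numClosedFieldType) n (V P : 'M[C]_n) : Prop :=
  [/\ mxadj P = P, P *m P = P & (P^T == V)%MS].

Definition blk_off (d : nat -> nat) (i : nat) : nat := \sum_(l < i) d l.

(* sigma_aux d m i j: the number sigma_{i,j+1} (j is 0-based) when m = k - i *)
Fixpoint sigma_aux (C : numClosedFieldType) (d : nat -> nat) (m i j : nat) : C :=
  match m with
  | 0 => 1
  | m'.+1 => if (j < d i.+1)%N then sqrtC (1 + (sigma_aux C d m' i.+1 j) ^+ 2)
             else 1
  end.

(* sigma d k i j = sigma_{i,(j+1)} of the paper (0-based column index j) *)
Definition sigma (C : numClosedFieldType) (d : nat -> nat) (k i j : nat) : C :=
  sigma_aux C d (k - i) i j.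

(* the normal-form matrix: only nonzero blocks Sigma_i at block position
   (i-1, i), 1 <= i <= k, with Sigma_i diagonal with entries sigma_{i,j} *)
Definition normal_form (C : numClosedFieldType) (n k : nat) (d : nat -> nat)
  : 'M[C]_n :=
  \matrix_(r < n, c < n)
    \sum_(i < k)
      (if [&& (blk_off d i.+1 <= c < blk_off d i.+1 + d i.+1)%N,
              (blk_off d i <= r < blk_off d i + d i)%N &
              (r - blk_off d i == c - blk_off d i.+1)%N]
       then sigma C d k i.+1 (c - blk_off d i.+1) else 0).

(* Main.v *)
Require Import Defs.
From HB Require Import structures.
From mathcomp Require Import all_boot all_order all_algebra.
From mathcomp Require Import complex reals.
From mathcomp Require Import sesquilinear spectral.
Import Order.TTheory GRing.Theory Num.Theory.
Local Open Scope ring_scope.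
From mathcomp Require Import zify ring.
Set Implicit Arguments. Unset Strict Implicit. Unset Printing Implicit Defensive.

Section Basics.
Variable C : numClosedFieldType.

Lemma madjE m n (A : 'M[C]_(m,n)) : mxadj A = (A ^t* )%sesqui.
Proof. by rewrite /mxadj map_trmx. Qed.

Lemma madjM m n p (A : 'M[C]_(m,n)) (B : 'M[C]_(n,p)) :
  mxadj (A *m B) = mxadj B *m mxadj A.
Proof. by rewrite /mxadj map_mxM trmx_mul. Qed.

Lemma madjK m n (A : 'M[C]_(m,n)) : mxadj (mxadj A) = A.
Proof.
by apply/matrixP => i j; rewrite /mxadj !mxE conjCK.
Qed.

Lemma madjZ m n a (A : 'M[C]_(m,n)) : mxadj (a *: A) = a^* *: mxadj A.
Proof. by apply/matrixP => i j; rewrite /mxadj !mxE rmorphM. Qed.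

Lemma madj0 m n : mxadj (0 : 'M[C]_(m,n)) = 0.
Proof. by apply/matrixP => i j; rewrite /mxadj !mxE conjC0. Qed.

Lemma madjD m n (A B : 'M[C]_(m,n)) : mxadj (A + B) = mxadj A + mxadj B.
Proof. by apply/matrixP => i j; rewrite /mxadj !mxE rmorphD. Qed.

Lemma madj_entry m n p (A : 'M[C]_(m,n)) (B : 'M[C]_(p,n)) i j :
  (A *m mxadj B) i j = (row i A *m mxadj (row j B)) 0 0.
Proof. by rewrite !mxE; apply: eq_bigr => l _; rewrite /mxadj !mxE. Qed.

Lemma self0 n (x : 'rV[C]_n) : x *m mxadj x = 0 -> x = 0.
Proof.
move=> H; apply/eqP; apply: contraT => xn0.
have := dotmx_is_dotmx xn0; rewrite dotmxE -madjE H mxE.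
by rewrite ltxx.
Qed.

Lemma sub_mul_adj0 m1 m2 n p1 p2 (A : 'M[C]_(m1,n)) (B : 'M[C]_(m2,n)) (x : 'M[C]_(p1,n)) (y : 'M[C]_(p2,n)) :
  A *m mxadj B = 0 -> (x <= A)%MS -> (y <= B)%MS -> x *m mxadj y = 0.
Proof.
move=> H /submxP[a ->] /submxP[b ->].
by rewrite madjM mulmxA -(mulmxA a) H mulmx0 mul0mx.
Qed.

Lemma orth_self0 m n (A : 'M[C]_(m,n)) (x : 'rV[C]_n) :
  (x <= A)%MS -> x *m mxadj A = 0 -> x = 0.
Proof.
move=> /submxP[a ->] H; apply: self0.
by rewrite madjM mulmxA H mul0mx.
Qed.

Lemma proj_fix n (V P : 'M[C]_n) p (x : 'M[C]_(p,n)) : is_orth_proj V P -> (x <= V)%MS -> x *m P^T = x.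
Proof.
case=> _ PP /eqmxP eqV xV.
have : (x <= P^T)%MS by rewrite eqV xV.
move=> /submxP[a ->]; by rewrite -mulmxA -trmx_mul PP.
Qed.

Lemma proj_conj n (V P : 'M[C]_n) : is_orth_proj V P -> map_mx (fun x => x^*) P = P^T.
Proof. by case=> H _ _; rewrite -{2}H /mxadj trmxK. Qed.

Lemma proj_sub n (V P : 'M[C]_n) m (X : 'M[C]_(m,n)) : is_orth_proj V P -> (X *m P^T <= V)%MS.
Proof. by case=> _ _ /eqmxP eqV; rewrite -eqV submxMl. Qed.


Lemma rowv0 n (z : 'rV[C]_n) : row 0 z = z.
Proof. by apply/rowP => l; rewrite !mxE; congr (z _ _); apply/val_inj; rewrite /= (ord1 0). Qed.

Definition ON n (f : nat -> 'rV[C]_n) r := forall j j', (j < r)%N -> (j' < r)%N ->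
  f j *m mxadj (f j') = (j == j')%:R%:M.

Definition fmx n r (f : nat -> 'rV[C]_n) : 'M[C]_(r, n) := \matrix_(j < r, l < n) f j 0 l.

Lemma fmx_unitary n r (f : nat -> 'rV[C]_n) : ON f r -> fmx r f *m mxadj (fmx r f) = 1%:M.
Proof.
move=> H; apply/matrixP => i j; rewrite madj_entry !rowK H // !mxE.
  by case: (i =P j) => [->|ne]; rewrite ?eqxx //; have -> : (val i == val j) = false by apply/eqP => h; apply: ne; apply: val_inj.
Qed.

Lemma rank_fmx n r (f : nat -> 'rV[C]_n) : ON f r -> \rank (fmx r f) = r.
Proof.
move=> H; apply: mxrank_unitary; apply/unitarymxP; rewrite -madjE; exact: fmx_unitary.
Qed.

Lemma fmx_sub n p (W : 'M[C]_(p,n)) r (f : nat -> 'rV[C]_n) :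
  (forall j, (j < r)%N -> (f j <= W)%MS) -> (fmx r f <= W)%MS.
Proof. by move=> H; apply/row_subP => j; rewrite rowK; apply: H. Qed.

Lemma ON_span n p (W : 'M[C]_(p,n)) r (f : nat -> 'rV[C]_n) :
  ON f r -> (forall j, (j < r)%N -> (f j <= W)%MS) -> \rank W = r -> (W <= fmx r f)%MS.
Proof.
move=> on fW rW.
have /mxrank_leqif_eq : (fmx r f <= W)%MS by apply: fmx_sub.
move=> [_]; rewrite rank_fmx // rW eqxx => /esym/andP[] _ //.
Qed.

Lemma ON_zero n p (W : 'M[C]_(p,n)) r (f : nat -> 'rV[C]_n) (z : 'rV[C]_n) :
  ON f r -> (forall j, (j < r)%N -> (f j <= W)%MS) -> \rank W = r ->
  (z <= W)%MS -> (forall j, (j < r)%N -> z *m mxadj (f j) = 0) -> z = 0.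
Proof.
move=> on fW rW zW zf.
have zF : (z <= fmx r f)%MS by apply: submx_trans (ON_span on fW rW).
apply: orth_self0 zF _.
by apply/matrixP => i j; rewrite madj_entry rowK (ord1 i) rowv0 zf // !mxE.
Qed.

Definition rowf q n (S : 'M[C]_(q,n)) (j : nat) : 'rV[C]_n :=
  if insub j is Some r then row r S else 0.

Lemma rowfE q n (S : 'M[C]_(q,n)) (r : 'I_q) : rowf S r = row r S.
Proof. by rewrite /rowf valK. Qed.

Lemma ext n p (W : 'M[C]_(p,n)) r (g : nat -> 'rV[C]_n) :
  (forall j, (j < r)%N -> (g j <= W)%MS) -> ON g r ->
  exists h, [/\ (r <= \rank W)%N, (forall j, (j < \rank W)%N -> (h j <= W)%MS),
     ON h (\rank W) & (forall j, (j < r)%N -> h j = g j)].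
Proof.
move=> gW on.
set G0 := fmx r g.
have rG0 : \rank G0 = r by apply: rank_fmx.
have G0W : (G0 <= W)%MS by apply: fmx_sub.
have rW : (r <= \rank W)%N by rewrite -rG0 mxrankS.
have rn : (r <= n)%N by rewrite -rG0 rank_leq_col.
set K := kermx (mxadj G0).
have rK : \rank K = (n - r)%N.
  by rewrite mxrank_ker madjE mxrank_map mxrank_tr rG0.
set X := (W :&: K)%MS.
have rX : (\rank W - r <= \rank X)%N.
  have := mxrank_sum_cap W K; have := rank_leq_col (W + K)%MS.
  rewrite rK -/X; lia.
set S := schmidt (row_base X).
have Su : S *m mxadj S = 1%:M.
  by rewrite madjE; apply/unitarymxP; apply: schmidt_unitarymx; apply: rank_leq_col.
have SX : (S <= X)%MS.
  by rewrite eqmx_schmidt_free ?row_base_free // eq_row_base.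
have SK : S *m mxadj G0 = 0 by apply/sub_kermxP; apply: submx_trans SX (capmxSr _ _).
have SW : (S <= W)%MS by apply: submx_trans SX (capmxSl _ _).
have Sg : forall (t : 'I_(\rank X)) j, (j < r)%N -> row t S *m mxadj (g j) = 0.
  move=> t j jr; apply: (sub_mul_adj0 SK); first exact: row_sub.
  by rewrite -[g j](rowK (fun j : 'I_r => g j) (Ordinal jr)); apply: row_sub.
have SS : forall t t' : 'I_(\rank X), row t S *m mxadj (row t' S) = (t == t')%:R%:M.
  move=> t t'; rewrite [LHS]mx11_scalar -madj_entry Su !mxE.
  by [].
exists (fun j => if (j < r)%N then g j else rowf S (j - r)); split => //.
- move=> j jW; case: ifP => jr; first exact: gW.
  have jX : (j - r < \rank X)%N by lia.
  by rewrite -[(j - r)%N]/(val (Ordinal jX)) rowfE; apply: submx_trans (row_sub _ _) SW.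
- move=> j j' jW j'W.
  case: ifP => jr; case: ifP => j'r.
  + exact: on.
  + have jX : (j' - r < \rank X)%N by lia.
    rewrite -[(j' - r)%N]/(val (Ordinal jX)) rowfE.
    rewrite -[g j]madjK -madjM Sg // madj0.
    have -> : (j == j') = false by apply/eqP; lia.
    by apply/matrixP => a b; rewrite !mxE mul0rn.
  + have jX : (j - r < \rank X)%N by lia.
    rewrite -[(j - r)%N]/(val (Ordinal jX)) rowfE Sg //.
    have -> : (j == j') = false by apply/eqP; lia.
    by apply/matrixP => a b; rewrite !mxE mul0rn.
  + have jX : (j - r < \rank X)%N by lia.
    have j'X : (j' - r < \rank X)%N by lia.
    rewrite -[(j - r)%N]/(val (Ordinal jX)) -[(j' - r)%N]/(val (Ordinal j'X)) !rowfE SS.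
    congr (_%:R%:M); congr (nat_of_bool _); apply/idP/idP => /eqP h; apply/eqP; [move: h => /(congr1 val) /= h; lia | apply/val_inj => /=; lia].
- by move=> j ->.
Qed.

End Basics.
Section Sig.
Variable C : numClosedFieldType.
Variable d : nat -> nat.

Lemma sigma_aux_gt0 m i j : 0 < sigma_aux C d m i j.
Proof.
elim: m i => [|m IH] i /=; first exact: ltr01.
case: ifP => _; last exact: ltr01.
rewrite sqrtC_gt0; apply: (@lt_le_trans _ _ 1); first exact: ltr01.
by rewrite lerDl ltW // exprn_gt0 // IH.
Qed.

Lemma sigma_gt0 k i j : 0 < sigma C d k i j.
Proof. exact: sigma_aux_gt0. Qed.

Lemma sigma_neq0 k i j : sigma C d k i j != 0.
Proof. by rewrite gt_eqF ?sigma_gt0. Qed.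

Lemma sigma_conj k i j : (sigma C d k i j)^* = sigma C d k i j.
Proof. by rewrite geC0_conj // ltW ?sigma_gt0. Qed.

Lemma sigma_top k j : sigma C d k k j = 1.
Proof. by rewrite /sigma subnn. Qed.

Lemma sigma_rec k i j : (1 <= i <= k)%N ->
  sigma C d k i.-1 j ^+ 2 = if (j < d i)%N then 1 + sigma C d k i j ^+ 2 else 1.
Proof.
move=> /andP[i1 ik]; rewrite /sigma.
have -> : (k - i.-1 = (k - i).+1)%N by lia.
rewrite /= prednK //; case: ifP => _; by rewrite ?sqrtCK ?expr1n.
Qed.

End Sig.
Definition inb (d : nat -> nat) i c := (blk_off d i <= c < blk_off d i + d i)%N.

Lemma off_S d i : blk_off d i.+1 = (blk_off d i + d i)%N.
Proof. by rewrite /blk_off big_ord_recr. Qed.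

Lemma off_mono d i i' : (i <= i')%N -> (blk_off d i <= blk_off d i')%N.
Proof.
elim: i' => [|i' IH]; first by rewrite leqn0 => /eqP ->.
rewrite leq_eqVlt => /orP[/eqP -> //|]; rewrite ltnS => /IH.
by rewrite off_S; lia.
Qed.

Lemma inb_uniq d i i' c : inb d i c -> inb d i' c -> i = i'.
Proof.
rewrite /inb.
wlog lt : i i' / (i < i')%N.
  move=> H; case: (ltngtP i i') => [/H //| /H h a b|-> //].
  by rewrite (h b a).
move=> /andP[_ a] /andP[b _].
have := off_mono d lt; rewrite off_S; lia.
Qed.

Lemma inb_ex d m c : (c < blk_off d m)%N -> exists2 i, (i < m)%N & inb d i c.
Proof.
elim: m => [|m IH]; first by rewrite /blk_off big_ord0.
case: (ltnP c (blk_off d m)) => [/IH [i im ci] _|cm cm1].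
  by exists i => //; lia.
exists m => //; rewrite /inb cm /=; by rewrite -off_S.
Qed.

Section NF.
Variable C : numClosedFieldType.
Local Open Scope ring_scope.

Lemma Ncol n k d (r c : 'I_n) i : (1 <= i <= k)%N -> inb d i c ->
  normal_form C n k d r c =
  if inb d i.-1 r && (r - blk_off d i.-1 == c - blk_off d i)%N
  then sigma C d k i (c - blk_off d i) else 0.
Proof.
move=> /andP[i1 ik] ci.
have ik' : (i.-1 < k)%N by lia.
rewrite mxE (bigD1 (Ordinal ik')) //= big1 ?addr0.
  rewrite prednK //; move: (ci); rewrite /inb => ->; by [].
move=> i' ne; rewrite ifF //; apply/negP => /and3P[a _ _].
have := inb_uniq (a : inb d i'.+1 c) ci => e; move/eqP: ne; apply.
apply: val_inj => /=; lia.
Qed.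

Lemma Ncol0 n k d (r c : 'I_n) : inb d 0 c -> normal_form C n k d r c = 0.
Proof.
move=> c0; rewrite mxE big1 // => i' _; rewrite ifF //; apply/negP => /and3P[a _ _].
by have := inb_uniq (a : inb d i'.+1 c) c0.
Qed.
End NF.
Section Main.
Variable C : numClosedFieldType.
Variables (n k : nat) (B : 'M[C]_n) (V P : nat -> 'M[C]_n).
Hypothesis HP : forall i, (i <= k)%N -> is_orth_proj (V i) (P i).
Hypothesis HB : forall i, (1 <= i <= k)%N -> (V i *m B^T <= V i.-1)%MS.
Hypothesis HE : forall i, (1 <= i < k)%N ->
     mxadj (P i.-1 *m B *m P i) *m (P i.-1 *m B *m P i)
     - (P i *m B *m P i.+1) *m mxadj (P i *m B *m P i.+1) = P i.
Hypothesis HEk : mxadj (P k.-1 *m B *m P k) *m (P k.-1 *m B *m P k) = P k.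

Let d := fun l => \rank (V l).
Let sg i j := sigma C d k i j.
Let E i := P i.-1 *m B *m P i.
Let Mi i := mxadj (E i) *m E i.

Definition good i (f : nat -> 'rV[C]_n) :=
  [/\ forall j, (j < d i)%N -> (f j <= V i)%MS, ON f (d i) &
      (1 <= i)%N -> forall j, (j < d i)%N -> f j *m (Mi i)^T = (sg i j)^+2 *: f j].

Lemma madj_tr m p (A : 'M[C]_(m,p)) : mxadj (A^T) = map_mx (fun x => x^*) A.
Proof. by rewrite /mxadj map_trmx trmxK. Qed.

Lemma Mi_tr i : (Mi i)^T = (E i)^T *m map_mx (fun x => x^*) (E i).
Proof. by rewrite /Mi trmx_mul /mxadj trmxK. Qed.

Lemma EB i p (x : 'M[C]_(p,n)) : (1 <= i <= k)%N -> (x <= V i)%MS ->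
  x *m B^T = x *m (E i)^T.
Proof.
move=> /andP[i1 ik] xV.
rewrite /E !trmx_mul !mulmxA (proj_fix (HP ik) xV).
have ik' : (i.-1 <= k)%N by lia.
rewrite (proj_fix (HP ik')) //.
apply: submx_trans (HB _); first exact: submxMr.
by rewrite i1 ik.
Qed.

Lemma good_top : exists f, good k f.
Proof.
case: (@ext _ n n (V k) 0 (fun _ => 0)) => [//|//|h [_ hW hON _]].
exists h; split => // _ j jd.
rewrite /Mi /E HEk (proj_fix (HP (leqnn k))) ?hW // /sg sigma_top expr1n scale1r //.
Qed.


Lemma step i F : (1 <= i <= k)%N -> good i F ->
  exists h, [/\ good i.-1 h, (d i <= d i.-1)%N &
     forall j, (j < d i)%N -> F j *m B^T = sg i j *: h j].
Proof.
move=> iik [FV Fon Feig].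
have i1 : (1 <= i)%N by lia.
have ik : (i <= k)%N by lia.
have ik' : (i.-1 <= k)%N by lia.
pose g j := (sg i j)^-1 *: (F j *m B^T).
have gV : forall j, (j < d i)%N -> (g j <= V i.-1)%MS.
  move=> j jd; apply: scalemx_sub; apply: submx_trans (HB iik).
  exact: submxMr (FV j jd).
have FE : forall j, (j < d i)%N -> F j *m B^T = F j *m (E i)^T.
  by move=> j jd; apply: EB iik (FV j jd).
have FEE : forall j j', (j < d i)%N -> (j' < d i)%N ->
    (F j *m (E i)^T) *m mxadj (F j' *m (E i)^T) = (sg i j)^+2 *: (j == j')%:R%:M.
  move=> j j' jd j'd.
  by rewrite madjM madj_tr mulmxA -(mulmxA (F j)) -Mi_tr Feig // -scalemxAl Fon.
have gon : ON g (d i).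
  move=> j j' jd j'd; rewrite /g madjZ -scalemxAl -scalemxAr scalerA !FE // FEE //.
  rewrite scalerA; case: (j =P j') => [<-|ne].
    have -> : ((sg i j)^-1)^* = (sg i j)^-1 by rewrite fmorphV; congr (_^-1); exact: sigma_conj.
    rewrite -[RHS]scale1r; congr (_ *: _); rewrite /sg.
    by field; rewrite sigma_neq0.
  by apply/matrixP => a b; rewrite !mxE mul0rn mulr0.
have [h [ddi hW hon hg]] := ext gV gon.
have Fh : forall j, (j < d i)%N -> F j *m B^T = sg i j *: h j.
  by move=> j jd; rewrite hg // /g scalerA mulfV ?scale1r // /sg sigma_neq0.
exists h; split => //; split => // i'1 j jd.
have ik2 : (1 <= i.-1 < k)%N by lia.
have HEi := HE ik2; rewrite prednK // in HEi.
have Mi' : Mi i.-1 = P i.-1 + E i *m mxadj (E i).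
  by rewrite -HEi /Mi /E subrK.
rewrite Mi' linearD /= mulmxDr (proj_fix (HP ik') (hW j jd)).
rewrite trmx_mul {1}/mxadj trmxK /sg sigma_rec //.
case: ifP => jdi.
  rewrite hg // /g FE // -!scalemxAl mulmxA -(mulmxA (F j)) -Mi_tr Feig //.
  rewrite -scalemxAl !scalerA -scalerDl; congr (_ *: _); rewrite /sg; ring.
have z0 : h j *m map_mx (fun x => x^*) (E i) = 0.
  apply: (ON_zero Fon FV (erefl _)).
    rewrite /E !map_mxM (proj_conj (HP ik)) mulmxA.
    exact: proj_sub (HP ik).
  move=> j0 j0d.
  rewrite -mulmxA -madj_tr -madjM -FE // Fh // madjZ -scalemxAr hon //; last by lia.
  have -> : (j == j0) = false by apply/eqP; lia.
  by apply/matrixP => a b; rewrite !mxE mul0rn mulr0.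
by rewrite mulmxA z0 mul0mx addr0 scale1r.
Qed.

Lemma build : exists F : nat -> nat -> 'rV[C]_n,
  (forall i, (i <= k)%N -> good i (F i)) /\
  (forall i, (1 <= i <= k)%N -> (d i <= d i.-1)%N /\
      forall j, (j < d i)%N -> F i j *m B^T = sg i j *: F i.-1 j).
Proof.
suff H : forall m, (m <= k)%N -> exists F : nat -> nat -> 'rV[C]_n,
  (forall i, (k - m <= i <= k)%N -> good i (F i)) /\
  (forall i, (k - m < i <= k)%N -> (d i <= d i.-1)%N /\
      forall j, (j < d i)%N -> F i j *m B^T = sg i j *: F i.-1 j).
  have [F [H1 H2]] := H k (leqnn k); exists F; split.
    by move=> i ik; apply: H1; rewrite subnn ik.
  by move=> i ik; apply: H2; rewrite subnn; lia.
elim=> [_|m IH mk].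
  have [f fg] := good_top; exists (fun _ => f); split.
    by move=> i; rewrite subn0 => /andP[a b]; have -> : i = k by lia.
  by move=> i; rewrite subn0; lia.
have [F [F1 F2]] := IH (ltnW mk).
set i0 := (k - m)%N.
have i0k : (1 <= i0 <= k)%N by rewrite /i0; lia.
have i0g : (k - m <= i0 <= k)%N by rewrite /i0; lia.
have [h [hg hd hrel]] := step i0k (F1 i0 i0g).
exists (fun l => if l == i0.-1 then h else F l); split.
  move=> i ik; case: eqP => [->|ne] //.
  by apply: F1; lia.
move=> i ik.
have ne : (i == i0.-1) = false by apply/eqP; lia.
rewrite ne; case: (i =P i0) => [->|ne2].
  by rewrite eqxx; split.
have ne3 : (i.-1 == i0.-1) = false by apply/eqP; lia.
by rewrite ne3; apply: F2; lia.
Qed.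

Hypothesis Horth : forall i j, (i <= k)%N -> (j <= k)%N -> i != j -> V i *m mxadj (V j) = 0.
Hypothesis Hsum : (\sum_(i < k.+1) V i == 1%:M)%MS.
Hypothesis HV0 : (V 0%N == kermx B^T)%MS.

Lemma sumd : blk_off d k.+1 = n.
Proof.
have dir : mxdirect (\sum_(i < k.+1) V i).
  apply/mxdirect_sumsP => i _; apply/eqP/rowV0P => v; rewrite sub_capmx => /andP[vi vs].
  apply: orth_self0 vi _; apply/sub_kermxP; apply: submx_trans vs _.
  apply/sumsmx_subP => j /= ne; apply/sub_kermxP; apply: Horth.
  - by rewrite -ltnS.
  - by rewrite -ltnS.
  - by apply: contra ne => /eqP e; apply/eqP/val_inj.
have := mxdirectP dir; rewrite /= (eqmx_rank Hsum) mxrank1 => ->.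
by [].
Qed.

Lemma trE m p (A : 'M[C]_(m,p)) i j : A^T i j = A j i.
Proof. by rewrite mxE. Qed.

Lemma final : exists U : 'M[C]_n,
    [/\ mxadj U *m U = 1%:M,
        (forall (i : nat) (c : 'I_n), (i <= k)%N ->
           (blk_off (fun l => \rank (V l)) i <= c
              < blk_off (fun l => \rank (V l)) i + \rank (V i))%N ->
           ((col c U)^T <= V i)%MS) &
        mxadj U *m B *m U = normal_form C n k (fun l => \rank (V l))].
Proof.
have [F [Fg Frel]] := build.
pose wr (c : nat) := \sum_(i < k.+1) (if inb d i c then F i (c - blk_off d i)%N else 0).
have wrE : forall i c, (i <= k)%N -> inb d i c -> wr c = F i (c - blk_off d i)%N.
  move=> i c ik ci; have ik1 : (i < k.+1)%N by [].
  rewrite /wr (bigD1 (Ordinal ik1)) //= ci big1 ?addr0 // => i' ne.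
  rewrite ifF //; apply/negP => ci'; move/eqP: ne; apply; apply: val_inj => /=.
  exact: inb_uniq ci' ci.
have blk : forall c : 'I_n, exists2 i, (i <= k)%N & inb d i c.
  move=> c; have [|i ik ci] := @inb_ex d k.+1 c; first by rewrite sumd.
  by exists i.
pose W : 'M[C]_n := \matrix_(c < n, l < n) wr c 0 l.
have rowW : forall c, row c W = wr c by move=> c; apply/rowP => l; rewrite !mxE.
have Fin : forall i j, (i <= k)%N -> (j < d i)%N -> (F i j <= V i)%MS.
  by move=> i j ik jd; have [a _ _] := Fg i ik; apply: a.
have Wu : W *m mxadj W = 1%:M.
  apply/matrixP => c c'; rewrite madj_entry !rowW.
  have [i ik ci] := blk c; have [i' ik' ci'] := blk c'.
  rewrite (wrE i) // (wrE i') // [RHS]mxE.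
  case: (i =P i') => [ii|ne].
    subst i'; have [_ on _] := Fg i ik.
    move: (ci) (ci'); rewrite /inb => ci1 ci1'.
    rewrite on; try lia. rewrite mxE.
    have -> : ((c - blk_off d i)%N == (c' - blk_off d i)%N) = (c == c').
      apply/eqP/eqP => [h|->] //; apply: val_inj => /=; lia.
    by [].
  rewrite (sub_mul_adj0 (Horth ik ik' (introN eqP ne))); last 2 first.
  - by apply: Fin => //; move: ci; rewrite /inb; lia.
  - by apply: Fin => //; move: ci'; rewrite /inb; lia.
  rewrite mxE; have -> : (c == c') = false; last by [].
  by apply/eqP => e; subst c'; apply: ne; exact: inb_uniq ci ci'.
have V0k : (V 0 <= kermx B^T)%MS by move/eqmxP: HV0 => ->.
have offn : forall i, (i <= k.+1)%N -> (blk_off d i <= n)%N.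
  by move=> i ik; rewrite -sumd; apply: off_mono.
have WB : W *m B^T = (normal_form C n k d)^T *m W.
  apply/row_matrixP => c; rewrite !row_mul rowW [RHS]mulmx_sum_row.
  have [i ik ci] := blk c; rewrite (wrE i) //.
  case: (posnP i) => [i0|ipos].
    subst i; rewrite (sub_kermxP (submx_trans (Fin _ _ (leq0n _) _) V0k)); last first.
      by move: ci; rewrite /inb; lia.
    by rewrite big1 // => r _; rewrite mxE trE Ncol0 // scale0r.
  have iik : (1 <= i <= k)%N by rewrite ipos ik.
  have [dd Fr] := Frel i iik.
  have offi : blk_off d i = (blk_off d i.-1 + d i.-1)%N by rewrite -off_S prednK.
  have := offn i (leqW ik); move: ci; rewrite /inb => ci offin.
  rewrite Fr; last by lia.
  have r0lt : (blk_off d i.-1 + (c - blk_off d i) < n)%N by lia.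
  rewrite (bigD1 (Ordinal r0lt)) //= big1 ?addr0.
    rewrite mxE trE (Ncol _ _ iik) /=; last by rewrite /inb.
    rewrite ifT; last by apply/andP; split; [rewrite /inb|apply/eqP]; lia.
    rewrite rowW (wrE (i.-1)); [|lia|rewrite /inb /=; lia].
    by congr (_ *: F _ _); rewrite /=; lia.
  move=> r ne; rewrite mxE trE (Ncol _ _ iik); last by rewrite /inb.
  rewrite ifF ?scale0r //; apply/negP => /andP[a /eqP b]; move/eqP: ne; apply.
  by apply: val_inj => /=; move: a; rewrite /inb; lia.
exists W^T; split.
- have cW : map_mx (fun x => x^*) (mxadj W) = W^T.
    by apply/matrixP => a b; rewrite /mxadj !mxE conjCK.
  have := congr1 (map_mx (fun x => x^*)) Wu.
  by rewrite map_mxM cW map_mx1 madj_tr.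
- move=> i c ik ci; rewrite tr_col trmxK rowW (wrE i) //.
  by apply: Fin => //; move: ci; rewrite /d /=; lia.
- apply: trmx_inj; rewrite !trmx_mul trmxK madj_tr.
  have -> : (map_mx (fun x => x^*) W)^T = mxadj W by [].
  by rewrite mulmxA WB -mulmxA Wu mulmx1.
Qed.
End Main.

Unset Implicit Arguments.
Set Strict Implicit.

Theorem proposition5p6 (R : realType) (n k : nat) (B : 'M[R[i]]_n)
  (V P : nat -> 'M[R[i]]_n) :
  (1 <= k)%N ->
  B *m (B *m mxadj B - mxadj B *m B) = - B ->
  B ^+ k != 0 -> B ^+ k.+1 = 0 ->
  (* orthogonal decomposition C^n = V_0 (+) ... (+) V_k *)
  (forall i j, (i <= k)%N -> (j <= k)%N -> i != j -> V i *m mxadj (V j) = 0) ->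
  (\sum_(i < k.+1) V i == 1%:M)%MS ->
  (* P i is the orthogonal projection onto V_i *)
  (forall i, (i <= k)%N -> is_orth_proj (V i) (P i)) ->
  (* V_0 = ker B *)
  (V 0%N == kermx B^T)%MS ->
  (* B(V_i) \subset V_(i-1) *)
  (forall i, (1 <= i <= k)%N -> (V i *m B^T <= V i.-1)%MS) ->
  (* E_i := Pr_{V_(i-1)} B |_{V_i}, written as P_(i-1) B P_i on all of C^n;
     E_i^* E_i - E_(i+1) E_(i+1)^* = Id_{V_i} for 1 <= i < k *)
  (forall i, (1 <= i < k)%N ->
     mxadj (P i.-1 *m B *m P i) *m (P i.-1 *m B *m P i)
     - (P i *m B *m P i.+1) *m mxadj (P i *m B *m P i.+1) = P i) ->
  (* E_k^* E_k = Id_{V_k} *)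
  mxadj (P k.-1 *m B *m P k) *m (P k.-1 *m B *m P k) = P k ->
  exists U : 'M[R[i]]_n,
    [/\ mxadj U *m U = 1%:M,
        (* the basis (columns of U) is subordinate to the splitting *)
        (forall (i : nat) (c : 'I_n), (i <= k)%N ->
           (blk_off (fun l => \rank (V l)) i <= c
              < blk_off (fun l => \rank (V l)) i + \rank (V i))%N ->
           ((col c U)^T <= V i)%MS) &
        mxadj U *m B *m U = normal_form (R[i]) n k (fun l => \rank (V l))].
Proof.
move=> _ _ _ _ Horth Hsum HP HV0 HB HE HEk.
exact: (final HP HB HE HEk Horth Hsum HV0).
Qed.
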